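(* Let $r>1$ be real and let $a,b\in\mathbb{S}$ be such that the open interval $(\sigma_{-r}(a),\sigma_{-r}(b))$ is a gap of $\sigma_{-r}(\mathbb{S})$. Then $b\in\mathbb{N}$, i.e. $v_p(b)<\infty$ for every prime $p$ and $v_p(b)=0$ for all but finitely many $p$.
   Context: A Steinitz number is a formal product $n=\prod_p p^{\alpha_p}$ over all primes with $\alpha_p\in\mathbb{Z}_{\ge0}\cup\{\infty\}$, $v_p(n)=\alpha_p$; $\mathbb{S}$ is the set of Steinitz numbers, and $\mathbb{N}\subset\mathbb{S}$ consists of those with all exponents finite and almost all zero. $\sigma_{-r}$ is defined on $\mathbb{S}$ multiplicatively by $\sigma_{-r}(p^\alpha)=\sum_{i=0}^\alpha p^{-ri}$ for finite $\alpha$ and $\sigma_{-r}(p^\infty)=\frac1{1-p^{-r}}$. A gap of $\sigma_{-r}(\mathbb{S})$ is a bounded connected component of $\mathbb{R}\setminus\sigma_{-r}(\mathbb{S})$. *)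

(* Defs.v *)
From HB Require Import structures.
From mathcomp Require Import all_boot all_order all_algebra.
From mathcomp Require Import all_classical all_reals all_analysis.
Set Implicit Arguments. Unset Strict Implicit. Unset Printing Implicit Defensive.
Import Order.TTheory GRing.Theory Num.Theory.
Import numFieldNormedType.Exports.
Local Open Scope classical_set_scope.
Local Open Scope ring_scope.

(* A Steinitz number is encoded by its exponent function v : nat -> option nat,
   where v p = Some k means v_p = k and v p = None means v_p = oo. *)
Definition exponents := nat -> option nat.

Definition is_steinitz (v : exponents) : Prop :=
  forall n, ~~ prime n -> v n = Some 0%N.

Definition steinitz_in_N (v : exponents) : Prop :=
  (forall p, prime p -> v p <> None) /\
  (exists M : nat, forall p, prime p -> (M <= p)%N -> v p = Some 0%N).

Definition sigma_loc (R : realType) (r : R) (p : nat) (a : option nat) : R :=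
  let q := (p%:R) `^ (- r) in
  match a with
  | Some k => \sum_(i < k.+1) q ^+ i
  | None => (1 - q)^-1
  end.

Definition sigma_partial (R : realType) (r : R) (v : exponents) (N : nat) : R :=
  \prod_(p < N | prime p) sigma_loc r p (v p).

Definition sigma (R : realType) (r : R) (v : exponents) : R :=
  limn (sigma_partial r v).

Definition sigma_image (R : realType) (r : R) : set R :=
  [set y | exists v, is_steinitz v /\ y = sigma r v].

Definition is_gap (R : realType) (E : set R) (G : set R) : Prop :=
  bounded_set G /\ exists x, (~` E) x /\ G = connected_component (~` E) x.

(* Main.v *)
Require Import Defs.
From HB Require Import structures.
From mathcomp Require Import all_boot all_order all_algebra.
From mathcomp Require Import all_classical all_reals all_analysis.
From mathcomp Require Import ring lra.
Import Order.TTheory GRing.Theory Num.Theory.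
Import numFieldNormedType.Exports.
Local Open Scope classical_set_scope.
Local Open Scope ring_scope.
Set Implicit Arguments. Unset Strict Implicit.
Lemma ln_le_sub1 (R : realType) (x : R) : 0 < x -> ln x <= x - 1.
Proof.
move=> x0; have := expR_ge1Dx (ln x); rewrite lnK ?posrE //.
move=> h; lra.
Qed.

Lemma powR_expR (R : realType) (m a : R) : 0 < m -> m `^ a = expR (a * ln m).
Proof. by move=> m0; rewrite /powR gt_eqF. Qed.

Lemma key_ineq (R : realType) (s m : R) : 0 < s -> 0 < m ->
  s * (m + 1) `^ (- (s + 1)) <= m `^ (- s) - (m + 1) `^ (- s).
Proof.
move=> s0 m0.
have m10 : 0 < m + 1 by rewrite addr_gt0.
rewrite !powR_expR //.
set A := ln m; set B := ln (m + 1).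
have hw : (m + 1)^-1 <= B - A.
  have h := @ln_le_sub1 R _ (divr_gt0 m0 m10).
  rewrite lnM ?posrE ?invr_gt0 // lnV ?posrE // in h.
  have e : m / (m + 1) - 1 = - (m + 1)^-1.
    by field; rewrite gt_eqF.
  rewrite -/A -/B e in h; lra.
have eB : expR (- B) = (m + 1)^-1 by rewrite expRN lnK ?posrE.
have e1 : expR (- (s + 1) * B) = expR (- s * B) * (m + 1)^-1.
  by rewrite -eB -expRD; congr expR; ring.
have e2 : expR (- s * A) = expR (- s * B) * expR (s * (B - A)).
  by rewrite -expRD; congr expR; ring.
rewrite e1 e2.
have hE : 0 < expR (- s * B) by apply: expR_gt0.
have hx := expR_ge1Dx (s * (B - A)).
set E := expR (- s * B) in hE *.
set X := expR (s * (B - A)) in hx *.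
set w := (m + 1)^-1 in hw *.
have : s * w <= X - 1 by nra.
nra.
Qed.
Lemma q_bounds (R : realType) (r : R) p : 1 < r -> prime p ->
  0 < p%:R `^ (-r) /\ p%:R `^ (-r) <= 2^-1.
Proof.
move=> r1 pp.
have p2 : (2 : R) <= p%:R by rewrite (ler_nat R 2 p) prime_gt1.
have hp : 1 <= (p%:R : R) by lra.
have hr : (p%:R : R) <= p%:R `^ r.
  by rewrite -{1}(@powRr1 R (p%:R)) ?ler0n //; apply: ler_powR => //; lra.
rewrite powRN; split; first by rewrite invr_gt0 powR_gt0 //; lra.
rewrite lef_pV2 ?posrE; [lra| |lra].
by apply: powR_gt0; lra.
Qed.

Lemma geo (R : realType) (q : R) n : (\sum_(i < n) q ^+ i) * (1 - q) = 1 - q ^+ n.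
Proof.
have := subrX1 q n; rewrite mulrC => h.
have -> : 1 - q = - (q - 1) by ring.
by rewrite mulrN -h opprB.
Qed.

Lemma loc_zero (R : realType) (r : R) p : sigma_loc r p (Some 0%N) = 1.
Proof. by rewrite /sigma_loc big_ord1 expr0. Qed.

Lemma loc_some_none (R : realType) (r : R) p k : 1 < r -> prime p ->
  sigma_loc r p (Some k) = sigma_loc r p None * (1 - (p%:R `^ (-r)) ^+ k.+1).
Proof.
move=> r1 pp; have [q0 q2] := q_bounds r1 pp.
rewrite /sigma_loc; set q := p%:R `^ (-r) in q0 q2 *.
rewrite -geo; field; rewrite subr_eq0 eq_sym lt_eqF //; lra.
Qed.

Lemma inv_le (R : realType) (q : R) : 0 < q -> q <= 2^-1 -> (1 - q)^-1 <= 1 + 2 * q.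
Proof.
move=> q0 q2.
have h1 : 0 < 1 - q by lra.
have e : (1 - q)^-1 * (1 - q) = 1 by rewrite mulVf // gt_eqF.
have y0 : 0 < (1 - q)^-1 by rewrite invr_gt0.
set y := (1 - q)^-1 in e y0 *.
have y2 : y <= 2 by nra.
nra.
Qed.

Lemma loc_ge1 (R : realType) (r : R) p a : 1 < r -> prime p -> 1 <= sigma_loc r p a.
Proof.
move=> r1 pp; have [q0 q2] := q_bounds r1 pp.
rewrite /sigma_loc; set q := p%:R `^ (-r) in q0 q2 *.
case: a => [k|].
  rewrite big_ord_recl expr0 lerDl; apply: sumr_ge0 => i _.
  by apply: exprn_ge0; lra.
by rewrite invf_ge1; lra.
Qed.

Lemma loc_gt1 (R : realType) (r : R) p a : 1 < r -> prime p -> a <> Some 0%N ->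
  1 < sigma_loc r p a.
Proof.
move=> r1 pp ha; have [q0 q2] := q_bounds r1 pp.
rewrite /sigma_loc; set q := p%:R `^ (-r) in q0 q2 *.
case: a ha => [[|k]|] ha //.
  rewrite big_ord_recl expr0 ltrDl big_ord_recl /= expr1.
  apply: ltr_pwDl => //; apply: sumr_ge0 => i _.
  by apply: exprn_ge0; lra.
by rewrite invf_gt1; lra.
Qed.

Lemma loc_le (R : realType) (r : R) p a : 1 < r -> prime p ->
  sigma_loc r p a <= 1 + 2 * p%:R `^ (-r).
Proof.
move=> r1 pp; have [q0 q2] := q_bounds r1 pp.
have hn : sigma_loc r p None <= 1 + 2 * p%:R `^ (-r) by apply: inv_le.
case: a => [k|] //.
rewrite loc_some_none //.
have hg := loc_ge1 None r1 pp.
have hk : 0 <= (p%:R `^ (-r)) ^+ k.+1 by apply: exprn_ge0; lra.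
nra.
Qed.
Lemma partialS (R : realType) (r : R) v N : sigma_partial r v N.+1 =
  sigma_partial r v N * (if prime N then sigma_loc r N (v N) else 1).
Proof.
by rewrite /sigma_partial big_mkcond /= big_ord_recr /= -big_mkcond.
Qed.

Lemma partial_ge1 (R : realType) (r : R) v N : 1 < r -> 1 <= sigma_partial r v N.
Proof.
move=> r1; elim: N => [|N IH]; first by rewrite /sigma_partial big_ord0.
rewrite partialS; case: ifP => pN; last by rewrite mulr1.
have := loc_ge1 (v N) r1 pN; nra.
Qed.

Lemma partial_mono (R : realType) (r : R) v N : 1 < r ->
  sigma_partial r v N <= sigma_partial r v N.+1.
Proof.
move=> r1; rewrite partialS; have := partial_ge1 v N r1.
case: ifP => pN; last by rewrite mulr1.
have := loc_ge1 (v N) r1 pN; nra.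
Qed.

Lemma partial_strict (R : realType) (r : R) v p : 1 < r -> prime p -> v p <> Some 0%N ->
  sigma_partial r v p < sigma_partial r v p.+1.
Proof.
move=> r1 pp hv; rewrite partialS pp; have := partial_ge1 v p r1.
have := loc_gt1 r1 pp hv; nra.
Qed.

Definition tt_ (R : realType) (r : R) (n : nat) : R :=
  if (1 < n)%N then n%:R `^ (-r) else 0.

Lemma tsum_aux (R : realType) (r : R) N : 1 < r ->
  \sum_(n < N.+2) tt_ r n <= (1 - (N.+1)%:R `^ (-(r - 1))) / (r - 1).
Proof.
move=> r1; have s0 : 0 < r - 1 by lra.
elim: N => [|N IH].
  rewrite !big_ord_recl big_ord0 /tt_ /= powR1; lra.
rewrite big_ord_recr /=.
have := @key_ineq R (r - 1) (N.+1%:R) s0 (ltr0Sn _ _).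
rewrite natr1 (_ : r - 1 + 1 = r); last by ring.
rewrite /tt_ /= => h.
have e : forall x : R, x / (r - 1) = x * (r - 1)^-1 by [].
have hi : (r - 1) * (r - 1)^-1 = 1 by rewrite mulfV // gt_eqF.
have hi0 : 0 < (r - 1)^-1 by rewrite invr_gt0.
set A := N.+1%:R `^ (- (r - 1)) in IH h *.
set B := N.+2%:R `^ (- (r - 1)) in h *.
set C := N.+2%:R `^ (- r) in h *.
set S := \sum_(i < N.+2) _ in IH *.
rewrite e in IH *; set y := (r - 1)^-1 in hi hi0 IH *.
have hC : C <= (A - B) * y.
  have := ler_wpM2r (ltW hi0) h; rewrite -mulrA mulrCA hi mulr1 //.
have : (1 - A) * y + (A - B) * y = (1 - B) * y by ring.
lra.
Qed.

Lemma tsum_bound (R : realType) (r : R) N : 1 < r ->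
  \sum_(n < N) tt_ r n <= (r - 1)^-1.
Proof.
move=> r1; have s0 : 0 < r - 1 by lra.
have hi0 : 0 < (r - 1)^-1 by rewrite invr_gt0.
case: N => [|[|N]].
- by rewrite big_ord0 ltW.
- by rewrite big_ord1 /tt_ /= ltW.
apply: (le_trans (tsum_aux N r1)).
have : 0 < N.+1%:R `^ (- (r - 1)) :> R by apply: powR_gt0; apply: ltr0Sn.
move: hi0; set y := (r - 1)^-1; set X := _ `^ _; nra.
Qed.

Lemma partial_bound0 (R : realType) (r : R) v N : 1 < r ->
  sigma_partial r v N <= expR (2 * \sum_(n < N) tt_ r n).
Proof.
move=> r1; elim: N => [|N IH]; first by rewrite /sigma_partial !big_ord0 mulr0 expR0.
rewrite partialS big_ord_recr /= mulrDr expRD.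
have hP := partial_ge1 v N r1.
have he : 0 < expR (2 * \sum_(i < N) tt_ r i) by apply: expR_gt0.
case: ifP => pN.
  have hl := loc_le (v N) r1 pN.
  have hg := loc_ge1 (v N) r1 pN.
  have hx := expR_ge1Dx (2 * tt_ r N).
  rewrite /tt_ prime_gt1 // in hx *.
  apply: ler_pM => //; [lra | lra | lra].
have : 1 <= expR (2 * tt_ r N).
  rewrite /tt_; case: ifP => _; last by rewrite mulr0 expR0.
  have := expR_ge1Dx (2 * N%:R `^ (- r)).
  have : 0 <= N%:R `^ (- r) by apply: powR_ge0.
  lra.
move=> h1; rewrite mulr1 -[sigma_partial r v N]mulr1.
apply: ler_pM => //; lra.
Qed.

Lemma partial_bound (R : realType) (r : R) v N : 1 < r ->
  sigma_partial r v N <= expR (2 * (r - 1)^-1).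
Proof.
move=> r1; apply: (le_trans (partial_bound0 v N r1)).
rewrite ler_expR ler_pM2l //; exact: tsum_bound.
Qed.
Lemma sigma_cvg (R : realType) (r : R) v : 1 < r ->
  (sigma_partial r v @ \oo --> sigma r v) /\
  forall N, sigma_partial r v N <= sigma r v.
Proof.
move=> r1.
have hm : {homo sigma_partial r v : n m / (n <= m)%N >-> n <= m}.
  by apply/nondecreasing_seqP => n; exact: partial_mono.
have hb : has_ubound (range (sigma_partial r v)).
  by exists (expR (2 * (r - 1)^-1)) => _ [n _ <-]; exact: partial_bound.
have hc := nondecreasing_cvgn hm hb.
have e : sigma r v = sup (range (sigma_partial r v)).
  by rewrite /sigma; apply: cvg_lim.
split; first by rewrite e.
move=> N; rewrite /sigma; apply: nondecreasing_cvgn_le => //.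
by apply/cvg_ex; exists (sup (range (sigma_partial r v))).
Qed.

Lemma sigma_const (R : realType) (r : R) v M :
  (forall n, (M <= n)%N -> v n = Some 0%N) -> sigma r v = sigma_partial r v M.
Proof.
move=> hv.
have h : forall d, sigma_partial r v (M + d) = sigma_partial r v M.
  elim => [|d IH]; first by rewrite addn0.
  rewrite addnS partialS IH hv ?leq_addr // loc_zero.
  by case: ifP => _; rewrite mulr1.
rewrite /sigma; apply: cvg_lim => //; apply: cvg_near_cst.
by exists M => // n /= Mn; rewrite -(subnKC Mn) h.
Qed.

Lemma partial_split (R : realType) (r : R) v w N p : (p < N)%N -> prime p ->
  (forall n, (n < N)%N -> n != p -> w n = v n) ->
  sigma_partial r w N * sigma_loc r p (v p) = sigma_partial r v N * sigma_loc r p (w p).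
Proof.
move=> pN pp hw; rewrite /sigma_partial.
rewrite [in LHS](bigD1 (Ordinal pN)) //= [in RHS](bigD1 (Ordinal pN)) //=.
rewrite (eq_bigr (fun i : 'I_N => sigma_loc r i (v i))); first by ring.
move=> i /andP[_ ine]; rewrite hw //.
Qed.
Lemma partial_homo (R : realType) (r : R) v : 1 < r ->
  {homo sigma_partial r v : n m / (n <= m)%N >-> n <= m}.
Proof. by move=> r1; apply/nondecreasing_seqP => n; exact: partial_mono. Qed.

Unset Implicit Arguments.
Theorem mainTheorem17 (R : realType) (r : R) (a b : exponents) :
  1 < r -> is_steinitz a -> is_steinitz b ->
  is_gap (sigma_image r) [set x : R | sigma r a < x < sigma r b] ->
  steinitz_in_N b.
Proof.
move=> r1 sa sb [_ [x [Ex Gx]]].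
have hx : sigma r a < x < sigma r b.
  by have := connected_component_refl Ex; rewrite -Gx.
have hnot : forall c, is_steinitz c -> sigma r a < sigma r c -> sigma r c < sigma r b -> False.
  move=> c sc h1 h2.
  have : connected_component (~` sigma_image r) x (sigma r c) by rewrite -Gx /= h1 h2.
  by move/connected_component_sub; apply; exists c.
have [hcv hle] := sigma_cvg b r1.
have hsa : sigma r a < sigma r b by case/andP: hx => h1 h2; apply: lt_trans h2.
have [M _ hM] := cvgr_gt _ hcv _ hsa.
apply: contrapT => hN.
have [[p [pp hp]] | hno] := pselect (exists p, prime p /\ b p = None).
- set M' := maxn M p.+1.
  have pM : (p < M')%N by rewrite leq_max leqnn orbT.
  have hP0 : sigma r a < sigma_partial r b M' by apply: hM; rewrite /= leq_maxl.
  have P1 := partial_ge1 b M' r1.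
  have hL := hle M'.
  have [q0 q2] := q_bounds r1 pp.
  set q := p%:R `^ (-r) in q0 q2.
  have hq : `|q| < 1 by rewrite ger0_norm; lra.
  set P0 := sigma_partial r b M' in hP0 P1 hL.
  have eps0 : 0 < (P0 - sigma r a) / P0 by apply: divr_gt0; lra.
  have [K _ hK] := cvgr_lt _ (cvg_expr hq) _ eps0.
  have hqK : q ^+ K.+1 < (P0 - sigma r a) / P0 by apply: hK; rewrite /= leqnSn.
  rewrite ltr_pdivlMr in hqK; last by lra.
  have hq0 : 0 < q ^+ K.+1 by apply: exprn_gt0.
  pose c := fun n => if n == p then Some K else if (n < M')%N then b n else Some 0%N.
  have hsplit := @partial_split R r b c M' p pM pp.
  have hc : sigma r c = sigma_partial r c M'.
    apply: sigma_const => n Mn; rewrite /c.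
    case: eqP => [e|_]; first by move: pM; rewrite -e ltnNge Mn.
    by rewrite ltnNge Mn.
  have e1 : sigma_partial r c M' = P0 * (1 - q ^+ K.+1).
    have := hsplit (fun n nM np => ltac:(by rewrite /c (negbTE np) nM)).
    rewrite {2}/c eqxx hp loc_some_none //.
    have hn : 0 < sigma_loc r p None by have := loc_ge1 None r1 pp; lra.
    rewrite -/q -/P0 => h; apply: (mulIf (negbT (gt_eqF hn))); rewrite h; ring.
  apply: (hnot c).
  + move=> n np; rewrite /c; case: eqP => [e|_]; first by rewrite e pp in np.
    by case: ifP => _ //; exact: sb.
  + rewrite hc e1; nra.
  + rewrite hc e1; nra.
- have hinf : forall M0, exists p, prime p /\ (M0 <= p)%N /\ b p <> Some 0%N.
    move=> M0; apply: contrapT => hne; apply: hN; split.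
      by move=> p pp hp; apply: hno; exists p.
    exists M0 => p pp Mp; apply: contrapT => hne'; apply: hne; exists p; done.
  have [p [pp [Mp hp]]] := hinf M.
  pose c := fun n => if (n < M)%N then b n else Some 0%N.
  have hc : sigma r c = sigma_partial r b M.
    rewrite (@sigma_const R r c M); last by move=> n Mn; rewrite /c ltnNge Mn.
    by apply: eq_bigr => i _; rewrite /c ltn_ord.
  apply: (hnot c).
  + move=> n np; rewrite /c; case: ifP => _ //; exact: sb.
  + by rewrite hc; apply: hM; rewrite /=.
  + rewrite hc; apply: (le_lt_trans (partial_homo b r1 Mp)).
    exact: (lt_le_trans (partial_strict r1 pp hp) (hle p.+1)).
Qed.
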